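(* Let $q$ be a prime power, $n\ge 3$ an integer, and $\mathbb F$ a field with a $\mathrm{GF}(q)$-subfield. Let $A\in\mathcal{PG}(n-1,q)$ with column set $E(N)$, and let $N=\tilde M(A)\cong\mathrm{PG}(n-1,q)$. Let $L_0$ be a line of $N$, let $v\in \mathrm{col}_{\mathbb F}(A[L_0])$ be a vector not parallel to any column of $A[L_0]$, let $f\in E(N)-L_0$, and let $\mathcal L$ be the set of lines of $N$ contained in $\mathrm{cl}_N(L_0\cup\{f\})$ and not containing $f$. For each $L\in\mathcal L$ let $v_L$ be a nonzero vector in the one-dimensional subspace $\mathrm{col}_{\mathbb F}(A[L])\cap \mathrm{col}_{\mathbb F}(v\,|\,A[f])$. Let $X=\{x_L: L\in\mathcal L\}$ be a set of $|\mathcal L|$ new elements and let $\overline A\in \mathbb F^{[n]\times(E(N)\cup X)}$ be the matrix with $\overline A[E(N)]=A$ and $\overline A[x_L]=v_L$ for each $L\in\mathcal L$. Then the matroid $\tilde M(\overline A)$ is determined up to isomorphism by $n$ and $q$ alone (independently of $\mathbb F$, $A$, $L_0$, $v$, $f$ and the choice of the vectors $v_L$).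
   Context: For $n\in\mathbb Z^+$, $[n]=\{1,\dots,n\}$. $\mathcal{PG}(n-1,q)$ is the set of $\mathrm{GF}(q)$-matrices $G$ with row set $[n]$ such that the matroid $\tilde M(G)$ represented by the columns of $G$ is isomorphic to $\mathrm{PG}(n-1,q)$. For a matrix $A$ over a field $\mathbb F$ with column set $E$, $\tilde M(A)$ is the (abstract) matroid on $E$ whose independent sets are the sets of linearly independent columns; $A[Y]$ is the submatrix on columns $Y$, $A[f]$ the column $f$, and $\mathrm{col}_{\mathbb F}(\cdot)$ denotes the $\mathbb F$-column space. $(v\,|\,A[f])$ is the two-column matrix with columns $v$ and $A[f]$. *)

(* Defs.v *)
From HB Require Import structures.
From mathcomp Require Import all_boot all_order all_algebra.
Set Implicit Arguments. Unset Strict Implicit. Unset Printing Implicit Defensive.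
Import GRing.Theory.
Local Open Scope ring_scope.

Section MatroidDefs.
Variable E : finType.
Variable ind : {set E} -> bool.

Definition mrank (X : {set E}) : nat :=
  (\max_(Y : {set E} | (Y \subset X) && ind Y) #|Y|)%N.

Definition mcl (X : {set E}) : {set E} :=
  [set e | mrank (e |: X) == mrank X].

Definition mline (L : {set E}) : bool := (mcl L == L) && (mrank L == 2%N).
End MatroidDefs.

Definition miso (E1 E2 : finType) (ind1 : {set E1} -> bool)
  (ind2 : {set E2} -> bool) : Prop :=
  exists phi : E1 -> E2, bijective phi /\ forall Y : {set E1}, ind1 Y = ind2 (phi @: Y).

(* A matrix over F with row set [n] and column set E is a family of
   column vectors A e : 'cV[F]_n. *)
Definition mindep (F : fieldType) (n : nat) (E : finType) (A : E -> 'cV[F]_n)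
  (Y : {set E}) : bool := free [seq A e | e <- enum Y].

Definition colspan (F : fieldType) (n : nat) (E : finType) (A : E -> 'cV[F]_n)
  (Y : {set E}) : {vspace 'cV[F]_n} := <<[seq A e | e <- enum Y]>>%VS.

(* Points of PG(n-1,K): nonzero vectors of K^n whose first nonzero entry is 1
   (one canonical representative of each 1-dimensional subspace). *)
Definition pg_normalized (K : finFieldType) (n : nat) (v : 'cV[K]_n) : bool :=
  [exists i : 'I_n, (v i 0 == 1) && [forall j : 'I_n, (j < i)%N ==> (v j 0 == 0)]].

Definition PGpt (K : finFieldType) (n : nat) := {v : 'cV[K]_n | pg_normalized v}.

Definition PGindep (K : finFieldType) (n : nat) (Y : {set PGpt K n}) : bool :=
  free [seq val p | p <- enum Y].

Definition isPG (K : finFieldType) (F : fieldType) (n : nat) (E : finType)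
  (A : E -> 'cV[F]_n) : Prop := miso (mindep A) (@PGindep K n).

Definition calL (F : fieldType) (n : nat) (E : finType) (A : E -> 'cV[F]_n)
  (L0 : {set E}) (f : E) (L : {set E}) : bool :=
  [&& mline (mindep A) L, L \subset mcl (mindep A) (f |: L0) & f \notin L].

(* column set E(N) \cup X, where X = {x_L : L in calL} is disjoint from E *)
Definition extE (F : fieldType) (n : nat) (E : finType) (A : E -> 'cV[F]_n)
  (L0 : {set E}) (f : E) : finType :=
  (E + {L : {set E} | calL A L0 f L})%type.

Definition Abar (F : fieldType) (n : nat) (E : finType) (A : E -> 'cV[F]_n)
  (L0 : {set E}) (f : E) (vL : {set E} -> 'cV[F]_n) :
  extE A L0 f -> 'cV[F]_n :=
  fun x => match x with inl e => A e | inr L => vL (val L) end.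

Arguments Abar [F n E] A L0 f vL _.
Arguments extE [F n E] A L0 f.

Definition lemma4p1_setting (K : finFieldType) (F : fieldType) (n : nat)
  (E : finType) (A : E -> 'cV[F]_n) (L0 : {set E}) (v : 'cV[F]_n) (f : E)
  (vL : {set E} -> 'cV[F]_n) : Prop :=
  (exists phi : {rmorphism K -> F}, injective phi) /\
      isPG K A /\
      mline (mindep A) L0 /\
      (v \in colspan A L0 /\ (forall e, e \in L0 -> v \notin <[A e]>%VS)) /\
      f \notin L0 /\
      forall L, calL A L0 f L ->
        vL L != 0 /\ vL L \in (colspan A L :&: (<[v]> + <[A f]>))%VS.

(* Main.v *)
Require Import Defs.
From HB Require Import structures.
From mathcomp Require Import all_boot all_order all_algebra.
From mathcomp Require Import zify.
Set Implicit Arguments. Unset Strict Implicit. Unset Printing Implicit Defensive.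
Import GRing.Theory.
Local Open Scope ring_scope.

Section Gen.
Variables (F : fieldType) (n : nat) (E : finType) (A : E -> 'cV[F]_n).

Lemma colspanE (Y : {set E}) : colspan A Y = (\sum_(e in Y) <[A e]>)%VS.
Proof. by rewrite /colspan span_def big_map big_enum. Qed.

Lemma colspanP (Y : {set E}) (U : {vspace 'cV[F]_n}) :
  reflect (forall e, e \in Y -> A e \in U) (colspan A Y <= U)%VS.
Proof.
apply: (iffP span_subvP) => [H e eY|H w /mapP[e]].
  by apply: H; apply/mapP; exists e; rewrite ?mem_enum.
by rewrite mem_enum => eY ->; apply: H.
Qed.

Lemma mem_colspan (Y : {set E}) e : e \in Y -> A e \in colspan A Y.
Proof. by move=> eY; apply: memv_span; apply/mapP; exists e; rewrite ?mem_enum. Qed.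

Lemma colspanS (Y Z : {set E}) : Y \subset Z -> (colspan A Y <= colspan A Z)%VS.
Proof. by move=> /subsetP sYZ; apply/colspanP => e /sYZ; apply: mem_colspan. Qed.

Lemma colspanU (Y Z : {set E}) : colspan A (Y :|: Z) = (colspan A Y + colspan A Z)%VS.
Proof.
apply/eqP; rewrite eqEsubv subv_add !colspanS ?subsetUl ?subsetUr // andbT /= ?andbT.
apply/colspanP => e; rewrite inE => /orP[eY|eZ].
  by apply: (subvP (addvSl _ _)); apply: mem_colspan.
by apply: (subvP (addvSr _ _)); apply: mem_colspan.
Qed.

Lemma colspan1 e : colspan A [set e] = <[A e]>%VS.
Proof. by rewrite colspanE big_set1. Qed.

Lemma colspan0 : colspan A set0 = 0%VS.
Proof. by rewrite colspanE big_set0. Qed.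

Lemma colspanU1 e (Y : {set E}) : colspan A (e |: Y) = (<[A e]> + colspan A Y)%VS.
Proof. by rewrite colspanU colspan1. Qed.

Lemma mindepE (Y : {set E}) : mindep A Y = (\dim (colspan A Y) == #|Y|).
Proof. by rewrite /mindep /free size_map -cardE. Qed.

Lemma mrank_le (X : {set E}) : (mrank (mindep A) X <= \dim (colspan A X))%N.
Proof.
apply/bigmax_leqP => Y /andP[sYX]; rewrite mindepE => /eqP <-.
exact/dimvS/colspanS.
Qed.

Lemma mrankE (X : {set E}) : mrank (mindep A) X = \dim (colspan A X).
Proof.
apply/eqP; rewrite eqn_leq mrank_le /=.
rewrite /mrank (bigmax_eq_arg set0); last first.
  by rewrite sub0set mindepE colspan0 dimv0 cards0.
case: arg_maxnP; first by rewrite sub0set mindepE colspan0 dimv0 cards0.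
move=> Y0 /andP[sY0X]; rewrite mindepE => iY0 maxY.
have sXY : (colspan A X <= colspan A Y0)%VS.
  apply/colspanP => e eX; apply/negPn/negP => nAe.
  have eY0 : e \notin Y0 by apply: contra nAe; apply: mem_colspan.
  have Ae0 : A e != 0 by apply: contra nAe => /eqP->; rewrite mem0v.
  have : (#|e |: Y0| <= #|Y0|)%N.
    apply: maxY.
    rewrite subUset sub1set eX sY0X /= mindepE colspanU1.
    rewrite cardsU1 eY0 -(eqP iY0); apply/eqP.
    have := dimv_sum_cap <[A e]>%VS (colspan A Y0).
    suff -> : (<[A e]> :&: colspan A Y0 = 0)%VS by rewrite dimv0 dim_vline Ae0 addn0.
    apply/eqP; rewrite -subv0; apply/subvP => w /memv_capP[/vlineP[k ->] wY].
    rewrite memv0 scaler_eq0; case: (eqVneq k 0) => [_|k0] //=.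
    by case/negP: nAe; rewrite -[A e](scalerK k0); apply: memvZ.
  by rewrite cardsU1 eY0 /= ltnn.
by rewrite -(eqP iY0) dimvS.
Qed.

Lemma clE (X : {set E}) e : (e \in mcl (mindep A) X) = (A e \in colspan A X).
Proof.
rewrite inE !mrankE colspanU1.
have := dimv_leqif_sup (addvSr <[A e]>%VS (colspan A X)).
move=> /eq_leqif; rewrite eq_sym => ->.
by rewrite subv_add subvv andbT -memvE.
Qed.

Lemma sub_cl (X : {set E}) : X \subset mcl (mindep A) X.
Proof. by apply/subsetP => e eX; rewrite clE mem_colspan. Qed.

Lemma colspan_cl (X : {set E}) : colspan A (mcl (mindep A) X) = colspan A X.
Proof.
apply/eqP; rewrite eqEsubv (colspanS (sub_cl X)) andbT.
by apply/colspanP => e; rewrite clE.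
Qed.

Lemma cl_flat (X : {set E}) : mcl (mindep A) (mcl (mindep A) X) = mcl (mindep A) X.
Proof. by apply/setP => e; rewrite !clE colspan_cl. Qed.

Lemma cl_sub (X Y : {set E}) : (colspan A X <= colspan A Y)%VS ->
  mcl (mindep A) X \subset mcl (mindep A) Y.
Proof. move=> sXY; apply/subsetP => e; rewrite !clE; exact: (subvP sXY). Qed.

Lemma cl_subE (X Y : {set E}) :
  (X \subset mcl (mindep A) Y) = (colspan A X <= colspan A Y)%VS.
Proof.
apply/idP/idP => [/colspanS|/cl_sub]; first by rewrite colspan_cl.
by apply: subset_trans; apply: sub_cl.
Qed.

Lemma flat_eq (X Y : {set E}) : mcl (mindep A) X = X -> mcl (mindep A) Y = Y ->
  colspan A X = colspan A Y -> X = Y.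
Proof. by move=> hX hY eXY; apply/setP => e; rewrite -hX -hY !clE eXY. Qed.

End Gen.

Section Iso.
Variables (E1 E2 : finType) (ind1 : {set E1} -> bool) (ind2 : {set E2} -> bool).
Variables (phi : E1 -> E2) (phi' : E2 -> E1).
Hypotheses (K1 : cancel phi phi') (K2 : cancel phi' phi).
Hypothesis Hind : forall Y, ind1 Y = ind2 (phi @: Y).

Lemma imK (Z : {set E2}) : phi @: (phi' @: Z) = Z.
Proof. by rewrite -imset_comp (eq_imset _ K2) imset_id. Qed.
Lemma imK' (Z : {set E1}) : phi' @: (phi @: Z) = Z.
Proof. by rewrite -imset_comp (eq_imset _ K1) imset_id. Qed.

Lemma iso_subset (X Y : {set E1}) : (phi @: X \subset phi @: Y) = (X \subset Y).
Proof.
apply/idP/idP => [/(imsetS phi')|]; first by rewrite !imK'.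
exact: imsetS.
Qed.

Lemma iso_mem (X : {set E1}) x : (phi x \in phi @: X) = (x \in X).
Proof. exact: (mem_imset _ _ (can_inj K1)). Qed.

Lemma iso_rank (X : {set E1}) : mrank ind2 (phi @: X) = mrank ind1 X.
Proof.
rewrite /mrank; apply/eqP; rewrite eqn_leq; apply/andP; split; apply/bigmax_leqP.
  move=> Z /andP[sZ iZ].
  apply: (bigmax_sup (phi' @: Z)); last by rewrite (card_imset _ (can_inj K2)).
  by rewrite -iso_subset imK sZ /= Hind imK.
move=> Y /andP[sY iY].
apply: (bigmax_sup (phi @: Y)); last by rewrite (card_imset _ (can_inj K1)).
by rewrite iso_subset sY /= -Hind.
Qed.

Lemma iso_cl (X : {set E1}) : mcl ind2 (phi @: X) = phi @: mcl ind1 X.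
Proof.
apply/setP => y; rewrite -[y]K2 iso_mem !inE -imsetU1 !iso_rank.
by [].
Qed.

Lemma iso_line (L : {set E1}) : mline ind2 (phi @: L) = mline ind1 L.
Proof. by rewrite /mline iso_cl iso_rank (inj_eq (imset_inj (can_inj K1))). Qed.

End Iso.

Lemma line_sym (F : fieldType) (vT : vectType F) (u w : vT) :
  w != 0 -> (w \in <[u]>)%VS -> (u \in <[w]>)%VS.
Proof.
move=> w0 /vlineP[k def_w]; have k0 : k != 0.
  by apply: contra w0 => /eqP k0; rewrite def_w k0 scale0r.
by rewrite -(scalerK k0 u) -def_w; apply: memvZ; apply: memv_line.
Qed.

Lemma dim2 (F : fieldType) (vT : vectType F) (a b : vT) :
  a \notin <[b]>%VS -> b != 0 -> \dim (<[a]> + <[b]>)%VS = 2%N.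
Proof.
move=> ab b0; have : free [:: a; b] by rewrite free_cons span_seq1 ab seq1_free.
by rewrite /free span_cons span_seq1 => /eqP.
Qed.

Section PG.
Variables (K : finFieldType) (n : nat).
Definition pgv (p : PGpt K n) : 'cV[K]_n := val p.

Lemma PGindepE (Y : {set PGpt K n}) : PGindep Y = mindep pgv Y.
Proof. by []. Qed.

Lemma pt_nz (p : PGpt K n) : pgv p != 0.
Proof.
rewrite /pgv; case: p => w /= nw; case/existsP: nw => i /andP[/eqP wi _].
by apply/eqP => w0; move: wi; rewrite w0 mxE => /eqP; rewrite eq_sym oner_eq0.
Qed.

Lemma pt_line_inj (p q : PGpt K n) : (pgv p \in <[pgv q]>)%VS -> p = q.
Proof.
rewrite /pgv; case: p q => [a na] [b nb] /= /vlineP[k def_a]; apply: val_inj => /=.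
case/existsP: na => i /andP[/eqP ai /forallP za].
case/existsP: nb => j /andP[/eqP bj /forallP zb].
have aE x : a x 0 = k * b x 0 by rewrite def_a mxE.
have ij : i = j.
  apply/eqP; rewrite eq_sym -[j == i]negbK; apply/negP => nij.
  case: (ltngtP i j) => [lij|lji|/val_inj eij]; last by rewrite eij eqxx in nij.
    by move: (zb i); rewrite lij /= => /eqP bi; move: ai; rewrite aE bi mulr0 => /eqP; rewrite eq_sym oner_eq0.
  by move: (za j); rewrite lji /= aE bj mulr1 => /eqP k0; move: ai; rewrite aE k0 mul0r => /eqP; rewrite eq_sym oner_eq0.
subst j; have k1 : k = 1 by move: ai; rewrite aE bj mulr1.
by rewrite def_a k1 scale1r.
Qed.

Lemma norm_exists (w : 'cV[K]_n) : w != 0 -> exists p : PGpt K n, (w \in <[pgv p]>)%VS.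
Proof.
move=> w0.
have [i wi] : exists i : 'I_n, w i 0 != 0.
  apply/existsP; apply: contraR w0 => /existsPn H; apply/eqP/matrixP => x y.
  by rewrite !mxE (ord1 y); apply/eqP; move: (H x); rewrite negbK.
have [j wj minj] : exists2 j : 'I_n, w j 0 != 0 & forall k : 'I_n, (k < j)%N -> w k 0 = 0.
  case: (@arg_minnP _ i (fun j : 'I_n => w j 0 != 0) (fun j : 'I_n => (j : nat)) wi).
  move=> j wj minj; exists j => // k kj.
  by apply/eqP; apply: contraTT kj => wk; rewrite -leqNgt; apply: minj.
pose u := (w j 0)^-1 *: w.
have nu : pg_normalized u.
  apply/existsP; exists j; rewrite /u mxE mulVf // eqxx /=.
  by apply/forallP => k; apply/implyP => kj; rewrite mxE (minj k kj) mulr0.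
exists (exist _ u nu); rewrite /pgv /=.
apply/vlineP; exists (w j 0); rewrite /u scalerA divff // scale1r //.
Qed.

Lemma PG_mod (X Y : {set PGpt K n}) :
  mcl (mindep pgv) X = X -> mcl (mindep pgv) Y = Y ->
  (colspan pgv X :&: colspan pgv Y)%VS = colspan pgv (X :&: Y).
Proof.
move=> fX fY; apply/eqP; rewrite eqEsubv subv_cap (colspanS _ (subsetIl X Y)) (colspanS _ (subsetIr X Y)) !andbT.
apply/subvP => w /memv_capP[wX wY].
have [->|w0] := eqVneq w 0; first exact: mem0v.
have [p wp] := norm_exists w0.
have pw := line_sym w0 wp.
have pX : p \in X by rewrite -fX clE; apply: (subvP _ _ pw); rewrite -memvE.
have pY : p \in Y by rewrite -fY clE; apply: (subvP _ _ pw); rewrite -memvE.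
by apply: (subvP _ _ wp); rewrite -memvE; apply: mem_colspan; rewrite inE pX pY.
Qed.

Lemma PG_pair (p q : PGpt K n) : p != q -> \dim (colspan pgv [set p; q]) = 2%N.
Proof.
move=> pq; rewrite colspanU1 colspan1 dim2 ?pt_nz //.
by apply: contra pq => /pt_line_inj ->.
Qed.

End PG.

Lemma line_eq (F : fieldType) (vT : vectType F) (u w : vT) :
  w != 0 -> (w \in <[u]>)%VS -> <[w]>%VS = <[u]>%VS.
Proof.
move=> w0 wu; apply/eqP; rewrite eqEsubv -!memvE wu.
exact: line_sym.
Qed.

Section Ext.
Variables (F : fieldType) (vT : vectType F).

Definition extb (U : {vspace vT}) (p : vT) : seq vT :=
  p :: vbasis (U :\: <[p]>)%VS.

Lemma extb_basis (U : {vspace vT}) (p : vT) : p \in U -> p != 0 -> basis_of U (extb U p).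
Proof.
move=> pU p0.
have eU : (<[p]> + (U :\: <[p]>))%VS = U.
  rewrite addvC -{2}(addv_diff_cap U <[p]>%VS); congr (_ + _)%VS.
  by apply/esym/capv_idPr; rewrite -memvE.
rewrite -{1}eU; apply: (cat_basis _ (seq1_basis p0) (vbasisP _)).
by apply/directv_addP; rewrite capvC capv_diff.
Qed.

Definition fullb (U : {vspace vT}) (p : vT) : seq vT := extb U p ++ vbasis (U^C)%VS.

Lemma fullb_basis (U : {vspace vT}) (p : vT) : p \in U -> p != 0 -> basis_of fullv (fullb U p).
Proof.
move=> pU p0; rewrite -(addv_complf U).
apply: (cat_basis _ (extb_basis pU p0) (vbasisP _)).
by apply/directv_addP; rewrite capv_compl.
Qed.

Lemma size_basis' (U : {vspace vT}) X : basis_of U X -> size X = \dim U.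
Proof. by case/andP => /eqP <- /eqP. Qed.

End Ext.

Lemma lin_auto (F : fieldType) (vT : vectType F) (U1 U2 : {vspace vT}) (p1 p2 : vT) :
  \dim U1 = \dim U2 -> p1 \in U1 -> p2 \in U2 -> p1 != 0 -> p2 != 0 ->
  exists h : 'End(vT), [/\ lker h == 0%VS, h p1 = p2 & (h @: U1)%VS = U2].
Proof.
move=> dU pU1 pU2 p10 p20.
have b1 := fullb_basis pU1 p10; have b2 := fullb_basis pU2 p20.
have [f fP] := linear_of_free (fullb U1 p1) (fullb U2 p2).
have mf := fP (basis_free b1) (etrans (size_basis' b2) (esym (size_basis' b1))).
pose h : 'End(vT) := linfun f.
have mh : map h (fullb U1 p1) = fullb U2 p2.
  by rewrite -mf; apply: eq_map => x; rewrite lfunE.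
move: mh; rewrite /fullb map_cat => /eqP; rewrite eqseq_cat; last first.
  by rewrite size_map !(size_basis' (extb_basis _ _)).
case/andP => /eqP m1 /eqP m2.
have imh : (h @: fullv)%VS = fullv.
  rewrite -{1}(span_basis b1) limg_span /fullb map_cat m1 m2.
  exact: span_basis b2.
have kh : lker h == 0%VS.
  have := limg_ker_dim h fullv; rewrite imh capfv => /eqP.
  by rewrite -{2}[\dim fullv]add0n eqn_add2r dimv_eq0.
exists h; split => //.
  by move: m1; rewrite /extb /= => -[].
rewrite -(span_basis (extb_basis pU1 p10)) limg_span m1.
exact: span_basis (extb_basis pU2 p20).
Qed.

Section PGauto.
Variables (K : finFieldType) (n : nat).

Lemma PG_auto (U1 U2 : {vspace 'cV[K]_n}) (p1 p2 : PGpt K n) :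
  \dim U1 = \dim U2 -> pgv p1 \in U1 -> pgv p2 \in U2 ->
  exists sigma : PGpt K n -> PGpt K n, exists sigma' : PGpt K n -> PGpt K n,
   [/\ cancel sigma sigma', cancel sigma' sigma,
       (forall Y, PGindep Y = PGindep (sigma @: Y)), sigma p1 = p2 &
       forall p, (pgv (sigma p) \in U2) = (pgv p \in U1)].
Proof.
move=> dU pU1 pU2.
have [h [kh hp hU]] := lin_auto dU pU1 pU2 (pt_nz p1) (pt_nz p2).
have hinj : injective h by apply/lker0P.
have hnz p : h (pgv p) != 0.
  by apply: contra (pt_nz p) => /eqP h0; apply/eqP; apply: hinj; rewrite h0 linear0.
pose sigma (p : PGpt K n) := odflt p [pick q | h (pgv p) \in <[pgv q]>%VS].
have sigP p : (h (pgv p) \in <[pgv (sigma p)]>)%VS.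
  rewrite /sigma; case: pickP => [q //|none].
  by have [q hq] := norm_exists (hnz p); move: (none q); rewrite hq.
have sigL p : <[pgv (sigma p)]>%VS = <[h (pgv p)]>%VS.
  by rewrite (line_eq (hnz p) (sigP p)).
have himL p q : (pgv p \in <[pgv q]>)%VS = (h (pgv p) \in <[h (pgv q)]>)%VS.
  by rewrite !memvE -!limg_line limg_ker0.
have sinj : injective sigma.
  move=> a b eab; apply: pt_line_inj; rewrite himL -sigL -eab sigL.
  exact: memv_line.
have [sigma' K1 K2] := injF_bij sinj.
exists sigma, sigma'; split => //.
- move=> Y; rewrite !PGindepE !mindepE card_imset // !colspanE.
  rewrite big_imset /=; last by move=> a b _ _; apply: sinj.
  rewrite [in RHS](eq_bigr (fun p => h @: <[pgv p]>)%VS); last first.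
    by move=> p _; rewrite sigL limg_line.
  by rewrite -limg_sum limg_dim_eq // (eqP kh) capv0.
- by apply/esym/pt_line_inj; rewrite -hp; apply: sigP.
- move=> p; rewrite -hU !memvE sigL -limg_line limg_ker0 //.
Qed.
End PGauto.

Lemma cap_line0 (F : fieldType) (vT : vectType F) (U : {vspace vT}) (x : vT) :
  x \notin U -> (U :&: <[x]> = 0)%VS.
Proof.
move=> xU; apply/eqP; rewrite -subv0; apply/subvP => w /memv_capP[wU /vlineP[k def_w]].
rewrite memv0 def_w scaler_eq0; case: (eqVneq k 0) => [_|k0] //=.
by case/negP: xU; rewrite -(scalerK k0 x) -def_w; apply: memvZ.
Qed.

Lemma dim_add_line (F : fieldType) (vT : vectType F) (U : {vspace vT}) (x : vT) :
  x != 0 -> \dim (U + <[x]>)%VS = (\dim U + (x \notin U))%N.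
Proof.
move=> x0; case: (boolP (x \in U)) => xU.
  by move: xU; rewrite memvE => /addv_idPl ->; rewrite addn0.
have := dimv_sum_cap U <[x]>%VS; rewrite cap_line0 // dimv0 addn0 dim_vline x0 => ->.
by [].
Qed.

Section Inst.
Variables (K : finFieldType) (F : fieldType) (n : nat) (E : finType) (A : E -> 'cV[F]_n).
Variables (psi : E -> PGpt K n) (psi' : PGpt K n -> E).
Hypotheses (Kp1 : cancel psi psi') (Kp2 : cancel psi' psi).
Hypothesis Hpsi : forall Y, mindep A Y = PGindep (psi @: Y).

Local Notation cl := (mcl (mindep A)).

Lemma Hpsi' Y : mindep A Y = mindep (@pgv K n) (psi @: Y).
Proof. by rewrite Hpsi. Qed.

Lemma dim_transfer (X : {set E}) :
  \dim (colspan A X) = \dim (colspan (@pgv K n) (psi @: X)).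
Proof. by rewrite -!mrankE (iso_rank Kp1 Kp2 Hpsi'). Qed.

Lemma cl_transfer (X : {set E}) : mcl (mindep (@pgv K n)) (psi @: X) = psi @: cl X.
Proof. exact: (iso_cl Kp1 Kp2 Hpsi'). Qed.

Lemma modN (X Y : {set E}) : cl X = X -> cl Y = Y ->
  (colspan A X :&: colspan A Y)%VS = colspan A (X :&: Y).
Proof.
move=> fX fY; apply/eqP; rewrite eq_sym eqEdim subv_cap.
rewrite (colspanS _ (subsetIl X Y)) (colspanS _ (subsetIr X Y)) /=.
have e1 := dimv_sum_cap (colspan A X) (colspan A Y).
have e2 := dimv_sum_cap (colspan (@pgv K n) (psi @: X)) (colspan (@pgv K n) (psi @: Y)).
have inj : injective psi by apply: can_inj Kp1.
rewrite -!colspanU PG_mod ?cl_transfer ?fX ?fY // -imsetU -imsetI in e2; last first.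
  by move=> a b _ _; apply: inj.
rewrite -colspanU in e1.
rewrite -!dim_transfer in e2.
rewrite leq_eqVlt; apply/orP; left; apply/eqP.
by apply/eqP; rewrite -(eqn_add2l (\dim (colspan A (X :|: Y)))) e1 e2.
Qed.

Lemma pairN g h : g != h -> \dim (colspan A [set g; h]) = 2%N.
Proof.
move=> gh; rewrite dim_transfer imsetU1 imset_set1 PG_pair //.
by apply: contra gh => /eqP /(can_inj Kp1) ->.
Qed.

Lemma A_nz e : A e != 0.
Proof.
have := dim_transfer [set e]; rewrite imset_set1 !colspan1 !dim_vline pt_nz.
by case: (A e != 0).
Qed.

Lemma line_flat L : mline (mindep A) L -> cl L = L.
Proof. by case/andP => /eqP. Qed.

Lemma line_dim L : mline (mindep A) L -> \dim (colspan A L) = 2%N.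
Proof. by case/andP => _ /eqP; rewrite mrankE. Qed.

Lemma two_pts (Z : {set E}) g h : (\dim (colspan A Z) <= 2)%N ->
  g \in Z -> h \in Z -> g != h -> colspan A Z = colspan A [set g; h].
Proof.
move=> dZ gZ hZ gh; apply/eqP; rewrite eq_sym eqEdim pairN // dZ andbT.
by apply: colspanS; rewrite subUset !sub1set gZ hZ.
Qed.

Lemma two_in (Z : {set E}) (w : 'cV[F]_n) : w != 0 -> w \in colspan A Z ->
  (forall g, g \in Z -> w \notin <[A g]>%VS) ->
  exists g, exists h, [/\ g \in Z, h \in Z & g != h].
Proof.
move=> w0 wZ Hg; case: (ltnP 1 #|Z|) => [/card_gt1P //|].
rewrite leq_eqVlt ltnS leqn0 => /orP[/cards1P[g eZ]|/eqP/cards0_eq eZ].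
  by move: wZ (Hg g); rewrite eZ colspan1 inE eqxx => -> /(_ isT).
by move: wZ; rewrite eZ colspan0 memv0 (negbTE w0).
Qed.

Variables (L0 : {set E}) (v : 'cV[F]_n) (f : E) (vL : {set E} -> 'cV[F]_n).
Hypotheses (HL0 : mline (mindep A) L0) (Hv : v \in colspan A L0)
  (Hvn : forall e, e \in L0 -> v \notin <[A e]>%VS) (Hf : f \notin L0)
  (HvL : forall L, calL A L0 f L ->
        vL L != 0 /\ vL L \in (colspan A L :&: (<[v]> + <[A f]>))%VS).

Local Notation ell := (<[v]> + <[A f]>)%VS.
Local Notation P := (cl (f |: L0)).

Lemma v_nz : v != 0.
Proof.
have : L0 != set0.
  by apply/negP => /eqP e0; move: (line_dim HL0); rewrite e0 colspan0 dimv0.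
case/set0Pn => e /Hvn; apply: contra => /eqP ->; exact: mem0v.
Qed.

Lemma dim_ell : (\dim ell <= 2)%N.
Proof. by rewrite -(span_seq1 (A f)) -span_cons; apply: dim_span. Qed.

Lemma ell_P : (ell <= colspan A P)%VS.
Proof.
rewrite colspan_cl colspanU1 [X in (X <= _)%VS]addvC; apply: addvS; first exact: subvv.
by rewrite -memvE.
Qed.

Lemma pt_ell e : A e \in ell -> e = f.
Proof.
move=> Ae; apply/eqP; apply/negPn/negP => ef.
have eM : colspan A [set e; f] = ell.
  apply/eqP; rewrite eqEdim pairN // (leq_trans dim_ell) // andbT.
  rewrite colspanU1 colspan1 subv_add -!memvE Ae /=.
  by rewrite memvE addvSr.
set M := cl [set e; f].
have fM : cl M = M by rewrite cl_flat.
have vM : v \in colspan A (M :&: L0).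
  rewrite -modN //; last exact: line_flat HL0.
  rewrite memv_cap Hv andbT colspan_cl eM.
  by rewrite memvE addvSl.
have [g [h [gM hM gh]]] := two_in v_nz vM (fun g gML => Hvn (setIP gML).2).
have dM : (\dim (colspan A M) <= 2)%N by rewrite colspan_cl pairN.
have dL0 : (\dim (colspan A L0) <= 2)%N by rewrite line_dim.
have e1 := two_pts dL0 (setIP gM).2 (setIP hM).2 gh.
have e2 := two_pts dM (setIP gM).1 (setIP hM).1 gh.
move: Hf; rewrite -(line_flat HL0) clE e1 -e2 colspan_cl eM.
by rewrite memvE addvSr.
Qed.

Lemma pt_ell' (w : 'cV[F]_n) g : w != 0 -> w \in ell -> (w \in <[A g]>)%VS -> g = f.
Proof.
move=> w0 wl wg; apply: pt_ell.
have := line_sym w0 wg; rewrite memvE => /subv_trans; apply; by rewrite -memvE.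
Qed.

Lemma x_nz L : calL A L0 f L -> vL L != 0.
Proof. by case/HvL. Qed.
Lemma x_ell L : calL A L0 f L -> vL L \in ell.
Proof. by case/HvL => _ /memv_capP[]. Qed.
Lemma x_L L : calL A L0 f L -> vL L \in colspan A L.
Proof. by case/HvL => _ /memv_capP[]. Qed.
Lemma calL_line L : calL A L0 f L -> mline (mindep A) L.
Proof. by case/and3P. Qed.
Lemma calL_f L : calL A L0 f L -> f \notin L.
Proof. by case/and3P. Qed.

Lemma xsub (Z : {set E}) L : cl Z = Z -> calL A L0 f L ->
  vL L \in colspan A Z -> L \subset Z.
Proof.
move=> fZ cL xZ.
have xZL : vL L \in colspan A (Z :&: L).
  by rewrite -modN ?memv_cap ?xZ ?x_L // line_flat // calL_line.
have [g [h [gZ hZ gh]]] : exists g, exists h, [/\ g \in Z :&: L, h \in Z :&: L & g != h].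
  apply: (two_in (x_nz cL) xZL) => g /setIP[_ gL]; apply/negP => xg.
  by move: (calL_f cL); rewrite -(pt_ell' (x_nz cL) (x_ell cL) xg) gL.
have dL : (\dim (colspan A L) <= 2)%N by rewrite line_dim ?calL_line.
have eL := two_pts dL (setIP gZ).2 (setIP hZ).2 gh.
rewrite -fZ cl_subE eL; apply: colspanS.
by rewrite subUset !sub1set (setIP gZ).1 (setIP hZ).1.
Qed.

Lemma F3 (S : {set E}) L : calL A L0 f L ->
  (vL L \in colspan A S) = (L \subset cl S).
Proof.
move=> cL; apply/idP/idP => [xS|].
  by apply: xsub; rewrite ?cl_flat ?colspan_cl.
by rewrite cl_subE => /subvP; apply; apply: x_L.
Qed.

Lemma F2 L L' : calL A L0 f L -> calL A L0 f L' -> L != L' ->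
  vL L \notin <[vL L']>%VS.
Proof.
move=> cL cL' LL'; apply/negP => xx.
have sLL' : L \subset L'.
  apply: xsub => //; first by rewrite line_flat ?calL_line.
  by move: xx; rewrite memvE => /subv_trans; apply; rewrite -memvE x_L.
case/negP: LL'; apply/eqP; apply: (@flat_eq _ _ _ A); rewrite ?line_flat ?calL_line //.
apply/eqP; rewrite eqEdim colspanS //= !line_dim ?calL_line //.
Qed.

Lemma F4 (S : {set E}) : (ell <= colspan A S)%VS = (P \subset cl S).
Proof.
rewrite cl_subE colspan_cl; apply/idP/idP => [sS|]; last first.
  by apply: subv_trans; rewrite -colspan_cl; apply: ell_P.
have vS : v \in colspan A S by apply: (subvP sS); rewrite memvE addvSl.
have fS : A f \in colspan A S by apply: (subvP sS); rewrite memvE addvSr.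
have vSL : v \in colspan A (cl S :&: L0).
  rewrite -modN ?cl_flat //; last exact: line_flat HL0.
  by rewrite memv_cap colspan_cl vS Hv.
have [g [h [gZ hZ gh]]] := two_in v_nz vSL (fun g gML => Hvn (setIP gML).2).
have dL0 : (\dim (colspan A L0) <= 2)%N by rewrite line_dim.
have e1 := two_pts dL0 (setIP gZ).2 (setIP hZ).2 gh.
rewrite colspanU1 subv_add -memvE fS e1 -(colspan_cl A S) /=.
by apply: colspanS; rewrite subUset !sub1set (setIP gZ).1 (setIP hZ).1.
Qed.

Lemma cl_mono (X Y : {set E}) : X \subset cl Y -> cl X \subset cl Y.
Proof. by rewrite !cl_subE colspan_cl. Qed.

Definition Ls := {L : {set E} | calL A L0 f L}.

Lemma F5 (S : {set E}) : ((ell :&: colspan A S)%VS != 0%VS) =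
  (f \in cl S) || [exists L : Ls, val L \subset cl S].
Proof.
apply/idP/idP => [nz|]; last first.
  case/orP => [fS|/existsP[[L cL] /= sL]].
    apply/negP => /eqP c0; have : A f \in (ell :&: colspan A S)%VS.
      by rewrite memv_cap -clE fS andbT memvE addvSr.
    by rewrite c0 memv0 (negbTE (A_nz f)).
  apply/negP => /eqP c0; have : vL L \in (ell :&: colspan A S)%VS.
    by rewrite memv_cap x_ell // F3.
  by rewrite c0 memv0 (negbTE (x_nz cL)).
case: (boolP (f \in cl S)) => //= fS.
set w := vpick (ell :&: colspan A S)%VS.
have w0 : w != 0 by rewrite vpick0.
have /memv_capP[wl wS] := memv_pick (ell :&: colspan A S)%VS.
have wPS : w \in colspan A (P :&: cl S).
  by rewrite -modN ?cl_flat // memv_cap (subvP ell_P) // [colspan A (cl S)]colspan_cl wS.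
have [g [h [gZ hZ gh]]] : exists g, exists h, [/\ g \in P :&: cl S, h \in P :&: cl S & g != h].
  apply: (two_in w0 wPS) => g /setIP[_ gS]; apply/negP => wg.
  by move: fS; rewrite -(pt_ell' w0 wl wg) gS.
set L := cl [set g; h].
have sgh : [set g; h] \subset P :&: cl S by rewrite subUset !sub1set gZ hZ.
have cL : calL A L0 f L.
  apply/and3P; split.
  - by rewrite /mline cl_flat eqxx mrankE colspan_cl pairN.
  - by apply: cl_mono; apply: (subset_trans sgh); apply: subsetIl.
  - apply: contra fS; apply/subsetP; apply: cl_mono.
    by apply: (subset_trans sgh); apply: subsetIr.
apply/existsP; exists (exist _ L cL) => /=.
by apply: cl_mono; apply: (subset_trans sgh); apply: subsetIr.
Qed.

Definition Sof (Y : {set extE A L0 f}) : {set E} := [set e | (inl e : extE A L0 f) \in Y].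
Definition Tof (Y : {set extE A L0 f}) : {set Ls} := [set L | (inr L : extE A L0 f) \in Y].

Lemma colspan_Abar (Y : {set extE A L0 f}) : colspan (Abar A L0 f vL) Y =
  (colspan A (Sof Y) + \sum_(L in Tof Y) <[vL (val L)]>)%VS.
Proof.
apply/eqP; rewrite eqEsubv subv_add; apply/and3P; split.
- apply/(@colspanP _ _ _ (Abar A L0 f vL)) => [[e|L]] eY /=.
    by apply: (subvP (addvSl _ _)); apply: mem_colspan; rewrite inE.
  apply: (subvP (addvSr _ _)); apply: (subvP (sumv_sup L _ (subvv _))).
    by rewrite inE.
  exact: memv_line.
- apply/(@colspanP _ _ _ A) => e; rewrite inE => eY.
  by have := mem_colspan (Abar A L0 f vL) eY.
- apply/subv_sumP => L; rewrite inE => LY; rewrite -memvE.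
  by have := mem_colspan (Abar A L0 f vL) LY.
Qed.

Definition Dn (S : {set E}) : nat :=
  (if P \subset cl S then 2 else
  if (f \in cl S) || [exists L : Ls, val L \subset cl S] then 1 else 0)%N.

Definition extra (S : {set E}) (T : {set Ls}) : nat :=
  (if #|T| == 0 then 0 else if #|T| == 1 then
    (if [forall L in T, val L \subset cl S] then 0 else 1) else 2 - Dn S)%N.

Lemma dim_cap_ell (S : {set E}) : \dim ell = 2%N ->
  \dim (colspan A S :&: ell)%VS = Dn S.
Proof.
move=> d2; rewrite /Dn -F4 -F5 capvC.
case: (boolP (ell <= colspan A S)%VS) => [sS|nS].
  by move/capv_idPl: sS => ->.
have : (\dim (ell :&: colspan A S) < 2)%N.
  have := dimv_leqif_eq (capvSl ell (colspan A S)); rewrite d2 => -[le eq].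
  rewrite ltn_neqAle eq le andbT; apply: contra nS => /eqP <-; apply: capvSr.
case: (boolP ((ell :&: colspan A S)%VS != 0%VS)) => [nz|]; last first.
  by rewrite negbK => /eqP ->; rewrite dimv0.
rewrite -dimv_eq0 in nz.
by case: (\dim _) nz => [|[|]].
Qed.

Lemma Dn_le S : (Dn S <= 2)%N.
Proof. by rewrite /Dn; case: ifP => //; case: ifP. Qed.

Lemma dimAbar (Y : {set extE A L0 f}) : \dim (colspan (Abar A L0 f vL) Y) =
  (\dim (colspan A (Sof Y)) + extra (Sof Y) (Tof Y))%N.
Proof.
rewrite colspan_Abar /extra; set S := Sof Y; set T := Tof Y.
case: (eqVneq #|T| 0%N) => [T0|T0].
  by rewrite (cards0_eq T0) big_set0 addv0 addn0.
case: (eqVneq #|T| 1%N) => [T1|T1].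
  have /cards1P[L eT] : #|T| == 1%N by rewrite T1.
  rewrite eT big_set1.
  have -> : [forall L' in [set L], val L' \subset cl S] = (val L \subset cl S).
    apply/forall_inP/idP => [H|H L']; first by apply: H; rewrite inE.
    by rewrite inE => /eqP ->.
  rewrite -F3 ?(valP L) // dim_add_line ?x_nz ?(valP L) //.
  by case: (_ \in _).
have : (1 < #|T|)%N by case: #|T| T0 T1 => [|[|]].
case/card_gt1P => L1 [L2 [L1T L2T L12]].
have c1 := valP L1; have c2 := valP L2.
have n12 : val L1 != val L2 by apply: contra L12 => /eqP/val_inj ->.
have d12 := dim2 (F2 c1 c2 n12) (x_nz c2).
set XT := (\sum_(L in T) <[vL (val L)]>)%VS.
have s12 : (<[vL (val L1)]> + <[vL (val L2)]> <= XT)%VS.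
  by rewrite subv_add !(sumv_sup _ _ (subvv _)).
have sXT : (XT <= ell)%VS.
  by apply/subv_sumP => L _; rewrite -memvE x_ell // (valP L).
have de : \dim ell = 2%N.
  apply/eqP; rewrite eqn_leq dim_ell /= -{1}d12; apply: dimvS.
  exact: subv_trans s12 sXT.
have -> : XT = ell.
  apply/eqP; rewrite eqEdim sXT de -d12; exact: dimvS.
have := dimv_sum_cap (colspan A S) ell; rewrite dim_cap_ell // de.
have := Dn_le S; lia.
Qed.

End Inst.

Section CalLMap.
Variables (n : nat) (F1 F2 : fieldType) (E1 E2 : finType).
Variables (A1 : E1 -> 'cV[F1]_n) (A2 : E2 -> 'cV[F2]_n).
Variables (L01 : {set E1}) (L02 : {set E2}) (f1 : E1) (f2 : E2).
Variables (phi : E1 -> E2) (phi' : E2 -> E1).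
Hypotheses (K1 : cancel phi phi') (K2 : cancel phi' phi).
Hypothesis Hphi : forall Y, mindep A1 Y = mindep A2 (phi @: Y).
Hypotheses (Hf : phi f1 = f2)
  (HP : phi @: mcl (mindep A1) (f1 |: L01) = mcl (mindep A2) (f2 |: L02)).

Lemma calL_map L : calL A1 L01 f1 L = calL A2 L02 f2 (phi @: L).
Proof.
rewrite /calL (iso_line K1 K2 Hphi) -HP (iso_subset K1) -Hf (iso_mem K1).
by [].
Qed.

Lemma calL_mapT L : calL A1 L01 f1 L -> calL A2 L02 f2 (phi @: L).
Proof. by rewrite calL_map. Qed.

End CalLMap.

Section Transfer.
Variables (n : nat) (F1 F2 : fieldType) (E1 E2 : finType).
Variables (A1 : E1 -> 'cV[F1]_n) (A2 : E2 -> 'cV[F2]_n).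
Variables (L01 : {set E1}) (L02 : {set E2}) (f1 : E1) (f2 : E2).
Variables (vL1 : {set E1} -> 'cV[F1]_n) (vL2 : {set E2} -> 'cV[F2]_n).
Variables (phi : E1 -> E2) (phi' : E2 -> E1).
Hypotheses (K1 : cancel phi phi') (K2 : cancel phi' phi).
Hypothesis Hphi : forall Y, mindep A1 Y = mindep A2 (phi @: Y).
Hypotheses (Hf : phi f1 = f2)
  (HP : phi @: mcl (mindep A1) (f1 |: L01) = mcl (mindep A2) (f2 |: L02)).
Hypothesis D1 : forall Y, \dim (colspan (Abar A1 L01 f1 vL1) Y) =
  (\dim (colspan A1 (Sof Y)) + extra (Sof Y) (Tof Y))%N.
Hypothesis D2 : forall Y, \dim (colspan (Abar A2 L02 f2 vL2) Y) =
  (\dim (colspan A2 (Sof Y)) + extra (Sof Y) (Tof Y))%N.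

Lemma Hphi' Z : mindep A2 Z = mindep A1 (phi' @: Z).
Proof. by rewrite Hphi (imK K2). Qed.
Lemma Hf' : phi' f2 = f1.
Proof. by rewrite -Hf K1. Qed.
Lemma HP' : phi' @: mcl (mindep A2) (f2 |: L02) = mcl (mindep A1) (f1 |: L01).
Proof. by rewrite -HP (imK' K1). Qed.

Definition PhiL (L : Ls A1 L01 f1) : Ls A2 L02 f2 :=
  exist _ (phi @: val L) (calL_mapT K1 K2 Hphi Hf HP (valP L)).
Definition PhiL' (L : Ls A2 L02 f2) : Ls A1 L01 f1 :=
  exist _ (phi' @: val L) (calL_mapT K2 K1 Hphi' Hf' HP' (valP L)).

Lemma PhiLK : cancel PhiL PhiL'.
Proof. by move=> L; apply: val_inj; rewrite /= (imK' K1). Qed.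
Lemma PhiLK' : cancel PhiL' PhiL.
Proof. by move=> L; apply: val_inj; rewrite /= (imK K2). Qed.

Definition Phi (x : extE A1 L01 f1) : extE A2 L02 f2 :=
  match x with inl e => inl (phi e) | inr L => inr (PhiL L) end.
Definition Phi' (x : extE A2 L02 f2) : extE A1 L01 f1 :=
  match x with inl e => inl (phi' e) | inr L => inr (PhiL' L) end.

Lemma PhiK : cancel Phi Phi'.
Proof. by case=> [e|L] /=; rewrite ?K1 ?PhiLK. Qed.
Lemma PhiK' : cancel Phi' Phi.
Proof. by case=> [e|L] /=; rewrite ?K2 ?PhiLK'. Qed.

Lemma Sof_Phi (Y : {set extE A1 L01 f1}) : Sof (Phi @: Y) = phi @: Sof Y.
Proof.
apply/setP => e2; rewrite -[e2]K2 (iso_mem K1) !inE.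
rewrite (_ : inl (phi (phi' e2)) = Phi (inl (phi' e2))) //.
by rewrite (mem_imset _ _ (can_inj PhiK)).
Qed.

Lemma Tof_Phi (Y : {set extE A1 L01 f1}) : Tof (Phi @: Y) = PhiL @: Tof Y.
Proof.
apply/setP => L2; rewrite -[L2]PhiLK' (mem_imset _ _ (can_inj PhiLK)) !inE.
rewrite (_ : inr (PhiL (PhiL' L2)) = Phi (inr (PhiL' L2))) //.
by rewrite (mem_imset _ _ (can_inj PhiK)).
Qed.

Lemma sub_map (L : Ls A1 L01 f1) (S : {set E1}) :
  (val (PhiL L) \subset mcl (mindep A2) (phi @: S)) = (val L \subset mcl (mindep A1) S).
Proof. by rewrite /= (iso_cl K1 K2 Hphi) (iso_subset K1). Qed.

Lemma Dn_map (S : {set E1}) : Dn A2 L02 f2 (phi @: S) = Dn A1 L01 f1 S.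
Proof.
rewrite /Dn (iso_cl K1 K2 Hphi) -HP (iso_subset K1).
rewrite [f2 \in _](_ : _ = (f1 \in mcl (mindep A1) S)); last by rewrite -Hf (iso_mem K1).
set b2 := [exists _, _]; set b1 := [exists _, _].
have -> : b2 = b1.
  apply/existsP/existsP => [[L2 H]|[L1 H]].
    by exists (PhiL' L2); rewrite -sub_map PhiLK' (iso_cl K1 K2 Hphi).
  by exists (PhiL L1); rewrite -(iso_cl K1 K2 Hphi) sub_map.
by [].
Qed.

Lemma transfer_dim (Y : {set extE A1 L01 f1}) :
  \dim (colspan (Abar A1 L01 f1 vL1) Y) = \dim (colspan (Abar A2 L02 f2 vL2) (Phi @: Y)).
Proof.
rewrite D1 D2 Sof_Phi Tof_Phi -!mrankE (iso_rank K1 K2 Hphi); congr (_ + _)%N.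
rewrite /extra (card_imset _ (can_inj PhiLK)) Dn_map.
have -> : [forall L in PhiL @: Tof Y, val L \subset mcl (mindep A2) (phi @: Sof Y)] =
          [forall L in Tof Y, val L \subset mcl (mindep A1) (Sof Y)].
  apply/forall_inP/forall_inP => [H L LT|H L2 /imsetP[L LT ->]].
    by rewrite -sub_map; apply: H; apply: imset_f.
  by rewrite sub_map; apply: H.
by [].
Qed.

Lemma transfer_miso : miso (mindep (Abar A1 L01 f1 vL1)) (mindep (Abar A2 L02 f2 vL2)).
Proof.
exists Phi; split; first by exists Phi'; [apply: PhiK | apply: PhiK'].
move=> Y; rewrite !mindepE transfer_dim (card_imset _ (can_inj PhiK)).
by [].
Qed.

End Transfer.

Lemma inst_plane (K : finFieldType) (F : fieldType) (n : nat) (E : finType)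
  (A : E -> 'cV[F]_n) (psi : E -> PGpt K n) (psi' : PGpt K n -> E)
  (Kp1 : cancel psi psi') (Kp2 : cancel psi' psi)
  (Hpsi : forall Y, mindep A Y = PGindep (psi @: Y))
  (L0 : {set E}) (f : E) (HL0 : mline (mindep A) L0) (Hf : f \notin L0) :
  [/\ \dim (colspan (@pgv K n) (psi @: mcl (mindep A) (f |: L0))) = 3%N,
      pgv (psi f) \in colspan (@pgv K n) (psi @: mcl (mindep A) (f |: L0)) &
      forall e, (pgv (psi e) \in colspan (@pgv K n) (psi @: mcl (mindep A) (f |: L0)))
                 = (e \in mcl (mindep A) (f |: L0))].
Proof.
have mem e : (pgv (psi e) \in colspan (@pgv K n) (psi @: mcl (mindep A) (f |: L0)))
                 = (e \in mcl (mindep A) (f |: L0)).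
  rewrite -clE (cl_transfer Kp1 Kp2 Hpsi) cl_flat (iso_mem Kp1) //.
split => //.
  rewrite -(dim_transfer Kp1 Kp2 Hpsi) colspan_cl colspanU1 addvC.
  rewrite dim_add_line ?(A_nz Kp1 Kp2 Hpsi) // line_dim //.
  by rewrite -clE (line_flat HL0) Hf.
by rewrite mem; apply: (subsetP (sub_cl _ _)); rewrite setU11.
Qed.

Theorem lemma4p1 (K : finFieldType) (q n : nat) :
  #|K| = q -> (3 <= n)%N ->
  forall (F1 : fieldType) (E1 : finType) (A1 : E1 -> 'cV[F1]_n)
         (L01 : {set E1}) (v1 : 'cV[F1]_n) (f1 : E1) (vL1 : {set E1} -> 'cV[F1]_n)
         (F2 : fieldType) (E2 : finType) (A2 : E2 -> 'cV[F2]_n)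
         (L02 : {set E2}) (v2 : 'cV[F2]_n) (f2 : E2) (vL2 : {set E2} -> 'cV[F2]_n),
  lemma4p1_setting K A1 L01 v1 f1 vL1 ->
  lemma4p1_setting K A2 L02 v2 f2 vL2 ->
  miso (mindep (Abar A1 L01 f1 vL1)) (mindep (Abar A2 L02 f2 vL2)).
Proof.
move=> _ _ F1 E1 A1 L01 v1 f1 vL1 F2 E2 A2 L02 v2 f2 vL2.
move=> [_ [[psi1 [[psi1' Kp11 Kp12] Hpsi1]] [HL01 [[Hv1 Hvn1] [Hf1 HvL1]]]]].
move=> [_ [[psi2 [[psi2' Kp21 Kp22] Hpsi2]] [HL02 [[Hv2 Hvn2] [Hf2 HvL2]]]]].
have D1 := dimAbar Kp11 Kp12 Hpsi1 HL01 Hv1 Hvn1 Hf1 HvL1.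
have D2 := dimAbar Kp21 Kp22 Hpsi2 HL02 Hv2 Hvn2 Hf2 HvL2.
have [dU1 pU1 mem1] := inst_plane Kp11 Kp12 Hpsi1 HL01 Hf1.
have [dU2 pU2 mem2] := inst_plane Kp21 Kp22 Hpsi2 HL02 Hf2.
have [sigma [sigma' [Ks1 Ks2 Hs Hsp Hsu]]] :=
  PG_auto (etrans dU1 (esym dU2)) pU1 pU2.
pose phi := psi2' \o sigma \o psi1.
pose phi' := psi1' \o sigma' \o psi2.
have K1 : cancel phi phi' by move=> e; rewrite /phi /phi' /= Kp22 Ks1 Kp11.
have K2 : cancel phi' phi by move=> e; rewrite /phi /phi' /= Kp12 Ks2 Kp21.
have Hphi Y : mindep A1 Y = mindep A2 (phi @: Y).
  rewrite Hpsi1 Hs Hpsi2; congr PGindep.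
  by rewrite -!imset_comp; apply: eq_imset => e /=; rewrite Kp22.
have Hf : phi f1 = f2 by rewrite /phi /= Hsp Kp21.
have memP e : (phi e \in mcl (mindep A2) (f2 |: L02)) = (e \in mcl (mindep A1) (f1 |: L01)).
  by rewrite -mem2 -mem1 /phi /= Kp22 Hsu.
have HP : phi @: mcl (mindep A1) (f1 |: L01) = mcl (mindep A2) (f2 |: L02).
  apply/setP => e2; rewrite -[e2]K2 (iso_mem K1) memP //.
exact: (transfer_miso K1 K2 Hphi Hf HP D1 D2).
Qed.
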